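(* Let $n=2d$ be even, let $G=D_{2n}=\langle z,y\mid z^{2n}=y^2=1,\ yzy=z^{-1}\rangle$ and $H=\langle z^2,y\rangle\cong D_n$ (an index 2 subgroup). Then for none of the cover types I, II, III-a, III-b does there exist an admissible homomorphism $f:T(m_1,\dots,m_r)\to G$.
   Context: For integers $m_1,\dots,m_r\ge 2$, $T(m_1,\dots,m_r):=\langle\gamma_1,\dots,\gamma_r\mid \gamma_1\cdots\gamma_r=1,\ \gamma_i^{m_i}=1\rangle$. Let $H\subset G$ have index 2 and let $f_H:=\pi_H\circ f$, where $\pi_H:G\to G/H\cong\mathbb Z/2$ is the quotient map. A homomorphism $f:T(m_1,\dots,m_r)\to G$ is admissible for a given cover type if $f$ is surjective, $f(\gamma_i)$ has order exactly $m_i$, and the branching data are as follows: Cover type I: $r=6$, $(m_i)=(2,2,2,2,2,2)$, and $f_H(\gamma_i)\neq 0$ for all $i$. Cover type II: $r=5$, $(m_i)=(2,2,2,2,c_5)$, $f_H(\gamma_i)\ne 0$ for $i\le 4$ and $f_H(\gamma_5)=0$. Cover type III-a: $r=4$, $(m_i)=(2,2,2,2d_4)$ with $d_4>1$, and $f_H(\gamma_i)\neq0$ for all $i$. Cover type III-b: $r=4$, $(m_i)=(2,2,c_3,c_4)$ with $c_3\le c_4$, $c_4>2$, $f_H(\gamma_1),f_H(\gamma_2)\ne 0$ and $f_H(\gamma_3)=f_H(\gamma_4)=0$. *)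

(* Defs.v *)
From mathcomp Require Import all_boot all_fingroup.
Set Implicit Arguments.
Unset Strict Implicit.
Unset Printing Implicit Defensive.

Local Open Scope group_scope.

(* A homomorphism f : T(m_0,...,m_{r-1}) -> G is, by the universal property of
   the presentation T = <gamma_i | gamma_0 ... gamma_{r-1} = 1, gamma_i^{m_i} = 1>,
   the same as a tuple g_i = f(gamma_i) of elements of G with ordered product 1
   and g_i^{m_i} = 1.  Indices are 0-based.
   [outH i] encodes the branching datum "f_H(gamma_i) <> 0", i.e. g_i \notin H
   (f_H = pi_H o f, pi_H : G -> G/H = Z/2). *)
Definition admissible (gT : finGroupType) (G H : {set gT}) (r : nat)
    (m : nat -> nat) (outH : nat -> bool) (g : 'I_r -> gT) : Prop :=
  [/\ (forall i : 'I_r, g i \in G),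
      \prod_(i < r) g i = 1,
      (forall i : 'I_r, g i ^+ m i = 1)
    & [/\ <<[set g i | i : 'I_r]>> = G,
           (forall i : 'I_r, #[g i] = m i)
         & (forall i : 'I_r, (g i \notin H) = outH i)]].

Definition typeI_m (i : nat) : nat := 2.
Definition typeI_out (i : nat) : bool := true.
Definition typeII_m (c5 : nat) (i : nat) : nat := nth 0%N [:: 2; 2; 2; 2; c5]%N i.
Definition typeII_out (i : nat) : bool := (i < 4)%N.
Definition typeIIIa_m (d4 : nat) (i : nat) : nat := nth 0%N [:: 2; 2; 2; 2 * d4]%N i.
Definition typeIIIa_out (i : nat) : bool := true.
Definition typeIIIb_m (c3 c4 : nat) (i : nat) : nat := nth 0%N [:: 2; 2; c3; c4]%N i.
Definition typeIIIb_out (i : nat) : bool := (i < 2)%N.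

(* Main.v *)
Require Import Defs.
From mathcomp Require Import all_boot all_fingroup.
From mathcomp Require Import cyclic zify.

Local Open Scope group_scope.

Section Dih.
Variable gT : finGroupType.
Variables (N : nat) (z y : gT).
Hypothesis hN : (1 < N)%N.
Hypothesis hNe : ~~ odd N.
Hypothesis h4 : (4 %| N)%N.
Hypothesis hz : z ^+ N = 1.
Hypothesis hy : y ^+ 2 = 1.
Hypothesis hyz : y * z * y = z^-1.

Lemma yinv : y^-1 = y.
Proof. by apply/eqP; rewrite eq_invg_mul -[y * y]/(y ^+ 2) hy. Qed.

Lemma zinv : z^-1 = z ^+ N.-1.
Proof.
apply/eqP; rewrite eq_invg_mul -expgS prednK ?hz //; lia.
Qed.

Lemma yz k : y * z ^+ k = z ^+ (k * N.-1) * y.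
Proof.
have : y * z ^+ k * y = z ^+ (k * N.-1).
  have -> : y * z ^+ k * y = (z ^+ k) ^ y by rewrite conjgE mulgA yinv.
  by rewrite conjXg conjgE mulgA yinv hyz zinv -expgM mulnC.
by move<-; rewrite -mulgA -[y * y]/(y ^+ 2) hy mulg1.
Qed.

Definition cmp (i j k : nat) := ((i + k * (if j == 0%N then 1 else N.-1)) %% N)%N.

Lemma mul_rep i j k l : (j < 2)%N ->
  z ^+ i * y ^+ j * (z ^+ k * y ^+ l) = z ^+ cmp i j k * y ^+ ((j + l) %% 2).
Proof.
move=> hj; rewrite /cmp expg_mod // expg_mod //.
case: j hj => [|[|//]] _ /=.
  by rewrite mulg1 add0n muln1 expgD mulgA.
by rewrite expg1 -mulgA (mulgA y) yz expgD -!mulgA expgS.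
Qed.

Definition Sp (P : nat -> nat -> bool) : {set gT} :=
  (fun p : 'I_N * 'I_2 => z ^+ p.1 * y ^+ p.2) @: [pred p : 'I_N * 'I_2 | P p.1 p.2].

Lemma Sp_group (P : nat -> nat -> bool) : P 0%N 0%N ->
  (forall i j k l, (i < N)%N -> (j < 2)%N -> (k < N)%N -> (l < 2)%N ->
      P i j -> P k l -> P (cmp i j k) ((j + l) %% 2)%N) ->
  group_set (Sp P).
Proof.
move=> P0 PC; apply/group_setP; split.
  apply/imsetP; exists (Ordinal (ltnW hN), Ordinal (isT : (0 < 2)%N)) => //.
  by rewrite /= mulg1.
move=> a b /imsetP [[i j] /= Pij ->] /imsetP [[k l] /= Pkl ->].
rewrite mul_rep //.
apply/imsetP.
have h1 : (cmp i j k < N)%N by rewrite /cmp ltn_pmod //; lia.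
have h2 : ((j + l) %% 2 < 2)%N by rewrite ltn_pmod.
by exists (Ordinal h1, Ordinal h2) => //=; apply: PC.
Qed.


Lemma G_sub : <<[set z; y]>> \subset Sp (fun _ _ => true).
Proof.
have SG := @Sp_group (fun _ _ => true) isT (fun _ _ _ _ _ _ _ _ _ _ => isT).
suff : <<[set z; y]>> \subset Group SG by [].
rewrite gen_subG; apply/subsetP => x; rewrite !inE => /orP [] /eqP ->.
  apply/imsetP; exists (Ordinal hN, Ordinal (isT : (0 < 2)%N)) => //.
  by rewrite /= mulg1 expg1.
apply/imsetP; exists (Ordinal (ltnW hN), Ordinal (isT : (1 < 2)%N)) => //.
by rewrite /= mul1g expg1.
Qed.

Hypothesis hG : #|<<[set z; y]>>| = (N * 2)%N.

Lemma uniq_rep i j k l : (i < N)%N -> (j < 2)%N -> (k < N)%N -> (l < 2)%N ->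
  z ^+ i * y ^+ j = z ^+ k * y ^+ l -> i = k /\ j = l.
Proof.
move=> hi hj hk hl E.
have cD : #|[pred p : 'I_N * 'I_2 | true]| = (N * 2)%N.
  by rewrite (eq_card (B:=predT)) // card_prod !card_ord.
have : #|Sp (fun _ _ => true)| == #|[pred p : 'I_N * 'I_2 | true]|.
  rewrite cD eqn_leq -{1}cD leq_imset_card /= -hG.
  exact: subset_leq_card G_sub.
move/imset_injP => inj.
have := inj (Ordinal hi, Ordinal hj) (Ordinal hk, Ordinal hl) isT isT E.
by case.
Qed.


Lemma oddNm1 : odd N.-1.
Proof. move: hNe hN; case: N => [|n] //= ; by case: (odd n). Qed.

Lemma odd_cmp i j k : odd (cmp i j k) = odd i (+) odd k.
Proof.
rewrite /cmp odd_mod ?(negbTE hNe) // oddD oddM.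
by case: (j == 0%N); rewrite ?oddNm1 andbT.
Qed.

Definition Ev := Sp (fun i _ => ~~ odd i).
Definition Tk := Sp (fun i j => ~~ odd (i + j)).

Lemma Ev_group : group_set Ev.
Proof.
apply: Sp_group => // i j k l _ _ _ _ hi hk.
by rewrite odd_cmp (negbTE hi) (negbTE hk).
Qed.

Lemma Tk_group : group_set Tk.
Proof.
apply: Sp_group => // i j k l _ hj _ hl hi hk.
rewrite oddD odd_cmp modn2 oddD.
move: hi hk; rewrite !oddD.
by case: (odd i); case: (odd k); case: (odd j); case: (odd l).
Qed.

Lemma H_sub : <<[set z ^+ 2; y]>> \subset Ev.
Proof.
suff : <<[set z ^+ 2; y]>> \subset Group Ev_group by [].
rewrite gen_subG; apply/subsetP => x; rewrite !inE => /orP [] /eqP ->.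
  have h2 : (2 %% N < N)%N by rewrite ltn_pmod //; lia.
  apply/imsetP; exists (Ordinal h2, Ordinal (isT : (0 < 2)%N)).
    by rewrite inE /= odd_mod ?(negbTE hNe).
  by rewrite /= mulg1 expg_mod.
apply/imsetP; exists (Ordinal (ltnW hN), Ordinal (isT : (1 < 2)%N)) => //.
by rewrite /= mul1g expg1.
Qed.

Lemma Ev_H i j : ~~ odd i -> z ^+ i * y ^+ j \in <<[set z ^+ 2; y]>>.
Proof.
move=> hi; apply: groupM; last by apply: groupX; apply: mem_gen; rewrite !inE eqxx orbT.
rewrite -(odd_double_half i) (negbTE hi) add0n -muln2 mulnC expgM.
by apply: groupX; apply: mem_gen; rewrite !inE eqxx.
Qed.

Lemma y_notT : y \notin Tk.
Proof.
apply/negP => /imsetP [[i j] /=]; rewrite inE /= => hij.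
move=> E'.
have E : z ^+ 0 * y ^+ 1 = z ^+ i * y ^+ j by rewrite mul1g expg1.
have [e1 e2] := uniq_rep _ _ _ _ (ltnW hN) (isT : (1 < 2)%N) (ltn_ord i) (ltn_ord j) E.
by rewrite -e1 -e2 in hij.
Qed.

Lemma lemA g : g \in <<[set z; y]>> -> g \notin <<[set z ^+ 2; y]>> -> g ^+ 2 = 1 -> g \in Tk.
Proof.
move=> /(subsetP G_sub) /imsetP [[i j] _ ->] /= nH g2.
have oi : odd i by apply: contraNT nH => /Ev_H.
case: j nH g2 => [[|[|//]] hj] /= nH g2; apply/imsetP.
- exfalso.
  move: g2; rewrite mulg1 -expgM -(expg_mod _ hz) => g2.
  have E : z ^+ (i * 2 %% N) * y ^+ 0 = z ^+ 0 * y ^+ 0 by rewrite !mulg1 g2.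
  have hm : (i * 2 %% N < N)%N by rewrite ltn_pmod //; lia.
  have [hm0 _] := uniq_rep _ _ _ _ hm (isT : (0 < 2)%N) (ltnW hN) (isT : (0 < 2)%N) E.
  move: (i : nat) oi hm0 => m om hm0.
  have : (N %| m * 2)%N by rewrite /dvdn hm0.
  move/(dvdn_trans h4) => h.
  by rewrite (mulnC m) -[4%N]/(2 * 2)%N dvdn_pmul2l // dvdn2 om in h.
- exists (Ordinal (ltn_ord i), Ordinal hj) => //.
  by rewrite inE /= addn1 /= oi.
Qed.

Lemma lemB g : g \in <<[set z ^+ 2; y]>> -> (2 < #[g])%N -> g \in Tk.
Proof.
move=> /(subsetP H_sub) /imsetP [[i j]]; rewrite inE /= => hi -> og.
case: j og => [[|[|//]] hj] /= og; apply/imsetP.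
  exists (Ordinal (ltn_ord i), Ordinal hj) => //.
  by rewrite inE /= addn0.
exfalso.
have : (z ^+ i * y ^+ 1) ^+ 2 = 1.
  rewrite -[_ ^+ 2]/((z ^+ i * y ^+ 1) * (z ^+ i * y ^+ 1)) mul_rep // /cmp /= -(expg_mod _ hy) modnn mulg1.
  rewrite -(expg_mod _ hz) addnC -mulnSr prednK; last by lia.
  by rewrite modnMl mod0n expg0.
move/eqP; rewrite -order_dvdn => /dvdn_leq => /(_ isT) h.
by move: og; rewrite ltnNge h.
Qed.

End Dih.

Theorem lemma5p7 (gT : finGroupType) (d : nat) (z y : gT) :
  (0 < d)%N ->
  z ^+ (2 * (2 * d))%N = 1 ->
  y ^+ 2 = 1 ->
  y * z * y = z^-1 ->
  #|<<[set z; y]>>| = (4 * (2 * d))%N ->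
  let G := <<[set z; y]>> in
  let H := <<[set z ^+ 2; y]>> in
  [/\ (forall g : 'I_6 -> gT, ~ admissible G H typeI_m typeI_out g),
      (forall (c5 : nat) (g : 'I_5 -> gT), (2 <= c5)%N ->
         ~ admissible G H (typeII_m c5) typeII_out g),
      (forall (d4 : nat) (g : 'I_4 -> gT), (1 < d4)%N ->
         ~ admissible G H (typeIIIa_m d4) typeIIIa_out g)
    & (forall (c3 c4 : nat) (g : 'I_4 -> gT), (2 <= c3)%N -> (c3 <= c4)%N -> (2 < c4)%N ->
         ~ admissible G H (typeIIIb_m c3 c4) typeIIIb_out g)].
Proof.
move=> hd hz hy hyz hG G H.
set N := (2 * (2 * d))%N in hz.
have hN : (1 < N)%N by rewrite /N; lia.
have hNe : ~~ odd N by rewrite /N; lia.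
have h4 : (4 %| N)%N by rewrite /N mulnA dvdn_mulr.
have hG' : #|<<[set z; y]>>| = (N * 2)%N by rewrite hG /N; lia.
have LA := @lemA gT N z y hN hNe h4 hz hy hyz hG'.
have LB := @lemB gT N z y hN hNe h4 hz hy hyz hG'.
have TG := @Tk_group gT N z y hN hNe h4 hz hy hyz.
have key : forall r (g : 'I_r -> gT), (forall i, g i \in Tk gT N z y) ->
    <<[set g i | i : 'I_r]>> <> G.
  move=> r g hT E.
  have yG : y \in G by apply: mem_gen; rewrite !inE eqxx orbT.
  have : <<[set g i | i : 'I_r]>> \subset Group TG.
    by rewrite gen_subG; apply/subsetP => x /imsetP [i _ ->]; exact: hT.
  rewrite E => /subsetP /(_ y yG).
  by apply/negP; exact: (@y_notT gT N z y hN hNe h4 hz hy hyz hG').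
split.
- move=> g [gG _ gm [gen _ gout]]; apply: (key _ g _ gen) => i.
  by apply: LA; [exact: gG | rewrite gout | exact: gm].
- move=> c5 g hc [gG prod gm [gen _ gout]]; apply: (key _ g _ gen).
  have hlow : forall i : 'I_5, (i < 4)%N -> g i \in Tk gT N z y.
    move=> i hi; apply: LA; [exact: gG | by rewrite gout |].
    by have := gm i; case: i hi => [[|[|[|[|]]]] ?].
  move=> i; case: (ltnP i 4) => hi; first exact: hlow.
  have -> : i = ord_max by apply: val_inj => /=; have := ltn_ord i; lia.
  rewrite big_ord_recr /= in prod.
  set X := \prod_(i < 4) _ in prod.
  have -> : g ord_max = X^-1 * (X * g ord_max) by rewrite mulKg.
  rewrite prod mulg1.
  suff : X^-1 \in Group TG by [].
  rewrite groupV; apply: group_prod => j _; apply: hlow => /=; exact: ltn_ord.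
- move=> d4 g hc [gG prod gm [gen _ gout]]; apply: (key _ g _ gen).
  have hlow : forall i : 'I_4, (i < 3)%N -> g i \in Tk gT N z y.
    move=> i hi; apply: LA; [exact: gG | by rewrite gout |].
    by have := gm i; case: i hi => [[|[|[|]]] ?].
  move=> i; case: (ltnP i 3) => hi; first exact: hlow.
  have -> : i = ord_max by apply: val_inj => /=; have := ltn_ord i; lia.
  rewrite big_ord_recr /= in prod.
  set X := \prod_(i < 3) _ in prod.
  have -> : g ord_max = X^-1 * (X * g ord_max) by rewrite mulKg.
  rewrite prod mulg1.
  suff : X^-1 \in Group TG by [].
  rewrite groupV; apply: group_prod => j _; apply: hlow => /=; exact: ltn_ord.
- move=> c3 c4 g hc3 hc34 hc4 [gG prod gm [gen ord gout]]; apply: (key _ g _ gen).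
  have hlow : forall i : 'I_4, (i < 2)%N -> g i \in Tk gT N z y.
    move=> i hi; apply: LA; [exact: gG | by rewrite gout |].
    by have := gm i; case: i hi => [[|[|]] ?].
  have h3 : g ord_max \in Tk gT N z y.
    apply: LB; last by rewrite ord.
    by have := gout ord_max; rewrite /typeIIIb_out /= => /negbFE.
  move=> i; case: (ltnP i 2) => hi; first exact: hlow.
  case: (ltnP i 3) => hi3; last first.
    have -> : i = ord_max by apply: val_inj => /=; have := ltn_ord i; lia.
    exact: h3.
  have -> : i = widen_ord (leqnSn 3) ord_max by apply: val_inj => /=; lia.
  rewrite big_ord_recr /= big_ord_recr /= in prod.
  have fact : forall X a e : gT, X * a * e = 1 -> X \in Group TG -> e \in Group TG -> a \in Group TG.
    move=> X a e E hX he.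
    have -> : a = X^-1 * (X * a * e * e^-1) by rewrite mulgK mulKg.
    by rewrite E mul1g groupM ?groupV.
  apply: (fact _ _ _ prod) => //.
  apply: group_prod => j _; apply: hlow => /=; exact: ltn_ord.
Qed.
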